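(* There exist constants $0<a_n\le A_n$ depending only on $n$ such that the following holds. Let $\alpha\in(0,1)$, $0<\epsilon<\min(\alpha,1-\alpha)$, $Q=[0,1]^n$, and let $\Lambda\subset\mathbb{R}^n$ be a convex set with $Q\subseteq\Lambda\subseteq n^{3/2}Q$. Let $E\subset\mathbb{R}^n$ be a measurable set of finite measure with $\frac{1}{|\Lambda|}\int_\Lambda\chi_E=\alpha$. Then there exists a cube $R\subseteq\Lambda$ with sides parallel to the axes and $a_n\epsilon^n\le|R|\le A_n\epsilon^n$ such that \[ \frac{\alpha-\epsilon}{1-\epsilon}\le\frac{1}{|R|}\int_R\chi_E\le\frac{\alpha}{1-\epsilon}. \]
   Context: $cQ$ denotes the dilate of $Q$ by factor $c$ about its center. *)

(* Defs.v *)
From HB Require Import structures.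
From mathcomp Require Import all_boot all_order all_algebra.
From mathcomp Require Import all_classical all_reals all_analysis.
Set Implicit Arguments. Unset Strict Implicit. Unset Printing Implicit Defensive.
Import Order.TTheory GRing.Theory Num.Theory.
Import numFieldNormedType.Exports.
Local Open Scope classical_set_scope.
Local Open Scope ring_scope.

(* Points of R^n are row vectors 'rV[R]_n; the i-th coordinate of x is x ord0 i. *)

Section Lebesgue_n.
Variables (R : realType) (n : nat).

Definition box (a b : 'rV[R]_n) : set 'rV[R]_n :=
  [set x | forall i : 'I_n, a ord0 i <= x ord0 i <= b ord0 i].

Definition box_vol (a b : 'rV[R]_n) : R :=
  \prod_(i < n) Num.max (b ord0 i - a ord0 i) 0.

Definition lebn (A : set 'rV[R]_n) : \bar R :=
  ereal_inf [set v : \bar R | exists a b : nat -> 'rV[R]_n,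
              A `<=` \bigcup_k box (a k) (b k) /\
              v = (\sum_(k <oo) (box_vol (a k) (b k))%:E)%E].

Definition lebn_measurable (E : set 'rV[R]_n) : Prop :=
  forall A : set 'rV[R]_n, lebn A = (lebn (A `&` E) + lebn (A `\` E))%E.

(* (1/|S|) \int_S chi_E  =  |E cap S| / |S|  (used for bounded S). *)
Definition avg_char (E S : set 'rV[R]_n) : R :=
  fine (lebn (E `&` S)) / fine (lebn S).

Definition unit_cube : set 'rV[R]_n := [set x | forall i : 'I_n, 0 <= x ord0 i <= 1].

(* c Q : the dilate of Q = [0,1]^n by factor c about its center (1/2,...,1/2). *)
Definition dilate_unit_cube (c : R) : set 'rV[R]_n :=
  [set x | forall i : 'I_n, 2^-1 - c / 2 <= x ord0 i <= 2^-1 + c / 2].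

Definition axis_cube (p : 'rV[R]_n) (s : R) : set 'rV[R]_n :=
  [set x | forall i : 'I_n, p ord0 i <= x ord0 i <= p ord0 i + s].

End Lebesgue_n.

(* Main.v *)
Require Import Defs.
From HB Require Import structures.
From mathcomp Require Import all_boot all_order all_algebra.
From mathcomp Require Import all_classical all_reals all_analysis.
From mathcomp Require Import ring lra.
Set Implicit Arguments. Unset Strict Implicit. Unset Printing Implicit Defensive.
Import Order.TTheory GRing.Theory Num.Theory.
Import numFieldNormedType.Exports.
Local Open Scope classical_set_scope.
Local Open Scope ring_scope.

Section Lebn.
Variables (R : realType) (n : nat).
Local Notation V := 'rV[R]_n.
Local Notation m := (@lebn R n).

Definition bvol (p : V * V) : \bar R := (box_vol p.1 p.2)%:E.
Definition cov (A : set V) (c : nat -> V * V) :=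
  A `<=` \bigcup_k box (c k).1 (c k).2.

Lemma lebnE A : m A = ereal_inf [set (\sum_(k <oo) bvol (c k))%E | c in cov A].
Proof.
rewrite /lebn; congr ereal_inf; apply/seteqP; split => x.
  move=> [a [b [Ac ->]]]; exists (fun k => (a k, b k)) => //.
move=> [c Ac <-]; exists (fun k => (c k).1), (fun k => (c k).2); split => //.
Qed.

Lemma box_vol_ge0 (a b : V) : 0 <= box_vol a b.
Proof. by apply: prodr_ge0 => i _; rewrite le_max lexx orbT. Qed.

Lemma bvol_ge0 p : (0 <= bvol p)%E.
Proof. by rewrite lee_fin box_vol_ge0. Qed.

Local Open Scope ereal_scope.

Lemma lebn_ge0 A : 0 <= m A.
Proof.
apply: le_ereal_inf_tmp => _ [a [b [_ ->]]].
by apply: nneseries_ge0 => k _ _; rewrite lee_fin box_vol_ge0.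
Qed.

Lemma le_lebn : {homo m : A B / A `<=` B >-> A <= B}.
Proof.
move=> A B AB; apply: ereal_inf_le_tmp => _ [a [b [Bab ->]]].
by exists a, b; split => //; exact: subset_trans Bab.
Qed.

Lemma lebn_sigma_subadditive : sigma_subadditive m.
Proof.
move=> A; have [[i ioo]|] := pselect (exists i, m (A i) = +oo).
  rewrite (eseries_pinfty _ _ ioo) ?leey// => k _.
  by rewrite -ltNye (lt_le_trans _ (lebn_ge0 _)).
rewrite -forallNE => Aoo.
suff add2e (e : {posnum R}) :
    m (\bigcup_k A k) <= \sum_(i <oo) m (A i) + e%:num%:E.
  by apply/lee_addgt0Pr => _/posnumP[].
rewrite (le_trans _ (epsilon_trick _ _ _))//; last first.
  by move=> k; exact: lebn_ge0.
pose P k (B : nat -> V * V) := cov (A k) B /\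
  \sum_(j <oo) bvol (B j) <= m (A k) + (e%:num / (2 ^ k.+1)%:R)%:E.
have [G PG] : {G : (nat -> V * V)^nat & forall k, P k (G k)}.
  apply: (@choice _ _ P) => k; rewrite /P lebnE.
  set S := (X in ereal_inf X); move infS : (ereal_inf S) => iS.
  case: iS infS => [r Sr|Soo|Soo].
  - have en1 : (0 < e%:num / (2 ^ k.+1)%:R)%R by [].
    have /(lb_ereal_inf_adherent en1) : ereal_inf S \is a fin_num by rewrite Sr.
    move=> [x [B AnB muBx] xS].
    by exists B; split => //; rewrite muBx -Sr; exact/ltW.
  - by have := Aoo k; rewrite lebnE -/S Soo.
  - suff : lbound S 0 by move/le_ereal_inf_tmp; rewrite Soo.
    by move=> /= _ [B AnB <-]; apply: nneseries_ge0 => *; exact: bvol_ge0.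
have muG_ge0 x : 0 <= (bvol \o uncurry G) x by exact: bvol_ge0.
apply: (@le_trans _ _ (\esum_(i in setT) (bvol \o uncurry G) i)).
  rewrite lebnE; apply: ereal_inf_lbound => /=.
  have /card_esym/ppcard_eqP[f] := card_nat2.
  exists (uncurry G \o f).
    apply: (@subset_trans _  (\bigcup_k \bigcup_j box (G k j).1 (G k j).2)) => [t [i _]|].
      by move=> /((PG i).1) -[j _ ?]; exists i => //; exists j.
    move=> t [i _ [j _ Bijt]]; exists (f^-1%FUN (i, j)) => //=.
    by rewrite invK ?inE.
  rewrite -(esum_pred_image (bvol \o uncurry G) _ xpredT) ?[fun=> _]set_true//.
  by rewrite image_eq.
rewrite (_ : esum _ _ = \sum_(i <oo) \sum_(j <oo ) bvol (G i j)); last first.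
  pose J : nat -> set (nat * nat) := fun i => [set (i, j) | j in setT].
  rewrite (_ : setT = \bigcup_k J k); last first.
    by rewrite predeqE => -[a b]; split => // _; exists a => //; exists b.
  rewrite esum_bigcupT /=; last 2 first.
    - apply/trivIsetP => i j _ _ ij.
      rewrite predeqE => -[k l] /=; split => //= -[] [_] _ [<-{k} _].
      by move=> [m' _] [] /esym/eqP; rewrite (negbTE ij).
    - by move=> /= [k l]; exact: bvol_ge0.
  rewrite -(image_id [set: nat]) -fun_true esum_pred_image//; last first.
    by move=> *; apply: esum_ge0 => *; exact: bvol_ge0.
  apply: eq_eseriesr => /= j _.
  rewrite -(esum_pred_image (bvol \o uncurry G) (pair j) predT)//=; last first.
    by move=> ? ? _ _; exact: (@can_inj _ _ _ snd).
    by move=> *; exact: bvol_ge0.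
  by congr esum; rewrite predeqE => -[a b]; split; move=> [i _ <-]; exists i.
apply: lee_lim.
- apply: is_cvg_nneseries => k *.
  by apply: nneseries_ge0 => l *; exact: (muG_ge0 (k, l)).
- by apply: is_cvg_nneseries => k *; apply: adde_ge0 => //; exact: lebn_ge0.
- by near=> k; apply: lee_sum => i _; exact: (PG i).2.
Unshelve. all: by end_near. Qed.

End Lebn.

Lemma lebn_dim0 (R : realType) (A : set 'rV[R]_0) : lebn A = +oo%E.
Proof.
apply/ereal_inf_pinfty => _ [a [b [_ ->]]].
rewrite /box_vol; under eq_eseriesr do rewrite big_ord0.
rewrite /=; apply/cvg_lim => //.
rewrite (_ : (fun k => _) = (fun k => (k%:R)%:E)); first exact/cvgenyP.
apply/funext => k /=; rewrite /series/= sumEFin big_const_nat iter_addr addr0 subn0.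
by [].
Qed.

Lemma split_len (R : realType) (a b h : R) :
  Num.max (Num.min b h - a) 0 + Num.max (b - Num.max a h) 0 = Num.max (b - a) 0.
Proof.
rewrite /Num.max /Num.min.
case: (ltP b h) => ?; case: (ltP a h) => ? /=; repeat case: ltP => ?; try lra.
Qed.

Section OM.
Variables (R : realType) (n' : nat).
Local Notation n := n'.+1.
Local Notation V := 'rV[R]_n.
Local Notation m := (@lebn R n).

Lemma lebn0 : m set0 = 0%E.
Proof.
apply/eqP; rewrite eq_le lebn_ge0 andbT.
apply: ereal_inf_lbound; exists (fun=> const_mx 1), (fun=> 0); split => //.
rewrite eseries0 // => k _ _; rewrite /box_vol big_ord_recl !mxE.
have -> : Num.max (0 - 1) 0 = 0 :> R by rewrite sub0r; apply/max_idPr; rewrite lerN10.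
by rewrite mul0r.
Qed.

HB.instance Definition _ := isOuterMeasure.Build R V m lebn0 (@lebn_ge0 R n)
  (@le_lebn R n) (@lebn_sigma_subadditive R n).

Local Open Scope ereal_scope.

Lemma halfspace_split (i : 'I_n) (h : R) (X : set V) :
  m (X `&` [set x | (x ord0 i <= h)%R]) + m (X `&` [set x | (h <= x ord0 i)%R]) <= m X.
Proof.
apply: le_ereal_inf_tmp => _ [a [b [Xab ->]]].
pose b1 k : V := \row_j (if j == i then Num.min (b k ord0 j) h else b k ord0 j).
pose a2 k : V := \row_j (if j == i then Num.max (a k ord0 j) h else a k ord0 j).
have volE k : box_vol (a k) (b k) = (box_vol (a k) (b1 k) + box_vol (a2 k) (b k))%R.
  have P1 (c d : V) : box_vol c d = (Num.max (d ord0 i - c ord0 i) 0 *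
      \prod_(j < n | j != i) Num.max (d ord0 j - c ord0 j) 0)%R.
    by rewrite /box_vol (bigD1 i).
  rewrite !P1 !mxE eqxx.
  have E1 : (\prod_(j < n | j != i) Num.max (b1 k ord0 j - a k ord0 j) 0 =
     \prod_(j < n | j != i) Num.max (b k ord0 j - a k ord0 j) 0)%R.
    by apply: eq_bigr => j ji; rewrite mxE (negbTE ji).
  have E2 : (\prod_(j < n | j != i) Num.max (b k ord0 j - a2 k ord0 j) 0 =
     \prod_(j < n | j != i) Num.max (b k ord0 j - a k ord0 j) 0)%R.
    by apply: eq_bigr => j ji; rewrite mxE (negbTE ji).
  by rewrite E1 E2 -mulrDl split_len.
have -> : \sum_(k <oo) (box_vol (a k) (b k))%:E =
   \sum_(k <oo) (box_vol (a k) (b1 k))%:E + \sum_(k <oo) (box_vol (a2 k) (b k))%:E.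
  rewrite -nneseriesD; last 2 first.
  - by move=> *; rewrite lee_fin box_vol_ge0.
  - by move=> *; rewrite lee_fin box_vol_ge0.
  by apply: eq_eseriesr => k _; rewrite volE EFinD.
apply: leeD; apply: ereal_inf_lbound.
- exists a, b1; split => // x [/Xab [k _ xk] xh]; exists k => // j.
  rewrite mxE; case: eqP => [->|_]; last exact: xk.
  by move: (xk i) => /andP[h1 h2]; rewrite le_min h1 h2 xh.
- exists a2, b; split => // x [/Xab [k _ xk] xh]; exists k => // j.
  rewrite mxE; case: eqP => [->|_]; last exact: xk.
  by move: (xk i) => /andP[h1 h2]; rewrite ge_max h1 h2 xh.
Qed.

Lemma cara_le (i : 'I_n) (h : R) : m.-caratheodory [set x : V | (x ord0 i <= h)%R].
Proof.
apply: le_caratheodory_measurable => X.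
apply: le_trans (halfspace_split i h X); apply: leeD2l; apply: le_lebn.
by move=> x [Xx /negP]; rewrite -ltNge => /ltW; split.
Qed.

Lemma cara_ge (i : 'I_n) (h : R) : m.-caratheodory [set x : V | (h <= x ord0 i)%R].
Proof.
apply: le_caratheodory_measurable => X.
apply: le_trans (halfspace_split i h X); rewrite addeC; apply: leeD2r; apply: le_lebn.
by move=> x [Xx /negP]; rewrite -ltNge => /ltW; split.
Qed.

Lemma cara_forall (P : 'I_n -> set V) : (forall i, m.-caratheodory (P i)) ->
  m.-caratheodory [set x | forall i, P i x].
Proof.
move=> HP.
suff H : forall s : seq 'I_n, m.-caratheodory [set x | forall i, i \in s -> P i x].
  have -> : [set x | forall i, P i x] = [set x | forall i, i \in enum 'I_n -> P i x].
    by apply/seteqP; split => x Hx i //; apply: Hx; rewrite mem_enum.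
  exact: H.
elim=> [|a s IH].
  have -> : [set x : V | forall i, i \in [::] -> P i x] = ~` set0.
    by apply/seteqP; split => x _ //; move=> i; rewrite in_nil.
  exact/caratheodory_measurable_setC/caratheodory_measurable_set0.
have -> : [set x | forall i, i \in a :: s -> P i x] =
   P a `&` [set x | forall i, i \in s -> P i x].
  apply/seteqP; split => x.
    by move=> Hx; split; [apply: Hx; rewrite mem_head | move=> i hi; apply: Hx; rewrite in_cons hi orbT].
  by move=> [Pa Hs] i; rewrite in_cons => /orP[/eqP->//|]; exact: Hs.
exact: caratheodory_measurable_setI.
Qed.

Lemma cara_cube (p : V) (s : R) : m.-caratheodory (axis_cube p s).
Proof.
have -> : axis_cube p s = [set x | forall i, ([set x : V | (p ord0 i <= x ord0 i)%R] `&`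
   [set x | (x ord0 i <= p ord0 i + s)%R]) x].
  by apply/seteqP; split => x /= H i; [move/andP: (H i)|case: (H i) => -> ->].
apply: cara_forall => i.
apply: caratheodory_measurable_setI; [exact: cara_ge | exact: cara_le].
Qed.

Definition hcube (p : V) (s : R) : set V :=
  [set x | forall i, (p ord0 i <= x ord0 i < p ord0 i + s)%R].

Lemma cara_hcube (p : V) (s : R) : m.-caratheodory (hcube p s).
Proof.
have -> : hcube p s = [set x | forall i, ([set x : V | (p ord0 i <= x ord0 i)%R] `&`
   ~` [set x | (p ord0 i + s <= x ord0 i)%R]) x].
  apply/seteqP; split => x /= H i.
    by move/andP: (H i) => [-> ?]; split => //; apply/negP; rewrite -ltNge.
  by case: (H i) => -> /negP; rewrite -ltNge.
apply: cara_forall => i.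
apply: caratheodory_measurable_setI; first exact: cara_ge.
exact/caratheodory_measurable_setC/cara_ge.
Qed.

End OM.

Section Aff.
Variables (R : realType) (n : nat).
Local Notation V := 'rV[R]_n.
Local Notation m := (@lebn R n).

Definition aff (p : V) (t : R) (x : V) : V := p + t *: x.

Lemma prod_cst (t : R) : \prod_(i < n) t = t ^+ n.
Proof. by rewrite -(big_mkord xpredT (fun=> t)) prodr_const_nat subn0. Qed.

Lemma box_vol_aff (p a b : V) t : 0 <= t ->
  box_vol (aff p t a) (aff p t b) = t ^+ n * box_vol a b.
Proof.
move=> t0; rewrite /box_vol -prod_cst -big_split /=; apply: eq_bigr => i _.
rewrite !mxE; have E : forall u v w : R, (u + v) - (u + w) = v - w by move=> *; lra.
by rewrite E -mulrBr maxr_pMr // mulr0.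
Qed.

Local Open Scope ereal_scope.

Lemma lebn_aff_le (p : V) t A : (0 < t)%R -> m (aff p t @` A) <= (t ^+ n)%:E * m A.
Proof.
move=> t0; have tn0 : (0 < t ^+ n)%R by rewrite exprn_gt0.
rewrite -lee_pdivrMl //; apply: le_ereal_inf_tmp => _ [a [b [Aab ->]]].
rewrite lee_pdivrMl //.
have -> : (t ^+ n)%:E * \sum_(k <oo) (box_vol (a k) (b k))%:E =
    \sum_(k <oo) (box_vol (aff p t (a k)) (aff p t (b k)))%:E.
  rewrite -nneseriesZl; last by move=> *; rewrite lee_fin box_vol_ge0.
  by apply: eq_eseriesr => k _; rewrite box_vol_aff ?(ltW t0).
apply: ereal_inf_lbound; exists (fun k => aff p t (a k)), (fun k => aff p t (b k)).
split => //; move=> _ [x /Aab [k _ xk] <-]; exists k => // i.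
by rewrite !mxE lerD2l lerD2l !ler_pM2l //; exact: xk.
Qed.

Lemma aff_inv (p : V) t A : (0 < t)%R ->
  aff (- (t^-1 *: p)) t^-1 @` (aff p t @` A) = A.
Proof.
move=> t0; have tn0 : (t != 0)%R by rewrite gt_eqF.
apply/seteqP; split => x.
  by move=> [_ [y Ay <-] <-]; rewrite /aff scalerDr scalerA mulVf // scale1r addKr.
move=> Ax; exists (aff p t x); first by exists x.
by rewrite /aff scalerDr scalerA mulVf // scale1r addKr.
Qed.

Lemma lebn_aff (p : V) t A : (0 < t)%R -> m (aff p t @` A) = (t ^+ n)%:E * m A.
Proof.
move=> t0; have tn0 : (0 < t ^+ n)%R by rewrite exprn_gt0.
apply/eqP; rewrite eq_le lebn_aff_le //=.
rewrite -lee_pdivlMl // -exprVn.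
have := lebn_aff_le (- (t^-1 *: p)) (aff p t @` A) (_ : (0 < t^-1)%R).
by rewrite aff_inv //; apply; rewrite invr_gt0.
Qed.

End Aff.

Lemma bern (R : realType) (e : R) k : 0 <= e <= 1 -> 1 - k%:R * e <= (1 - e) ^+ k.
Proof.
move=> /andP[e0 e1]; elim: k => [|k IH]; first by rewrite mul0r subr0 expr0.
rewrite exprS.
have h1 : 0 <= 1 - e by lra.
have h2 : (1 - e) * (1 - k%:R * e) <= (1 - e) * (1 - e) ^+ k by rewrite ler_wpM2l.
have h3 : 0 <= k%:R * e * e by rewrite mulr_ge0 // mulr_ge0.
rewrite -natr1; nra.
Qed.

Lemma lim_left (R : realType) k (s c r : R) : 0 < s -> 0 <= c ->
  (forall s', 0 < s' < s -> s' ^+ k * c <= r) -> s ^+ k * c <= r.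
Proof.
move=> s0 c0 H; apply/ler_addgt0Pr => e e0.
set A := s ^+ k * c * k%:R.
have A0 : 0 <= A by rewrite /A !mulr_ge0 // exprn_ge0 // ltW.
set eta := Num.min (2^-1) (e / (A + 1)).
have eta0 : 0 < eta by rewrite lt_min invr_gt0 ltr0n /= divr_gt0 //; lra.
have eta1 : eta <= 2^-1 by rewrite ge_min lexx.
have eta2 : eta <= e / (A + 1) by rewrite ge_min lexx orbT.
have Ae : A * eta <= e.
  have : A * eta <= A * (e / (A + 1)) by rewrite ler_wpM2l.
  move/le_trans; apply; rewrite mulrA ler_pdivrMr; last lra.
  nra.
have hs : 0 < s * (1 - eta) < s.
  apply/andP; split; first by rewrite mulr_gt0 //; lra.
  by rewrite -subr_gt0 -{1}(mulr1 s) -mulrBr mulr_gt0 //; lra.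
have Hr := H _ hs; rewrite exprMn -mulrA in Hr.
have hb' : 1 - k%:R * eta <= (1 - eta) ^+ k by apply: bern; apply/andP; split; lra.
have sk : 0 <= s ^+ k by rewrite exprn_ge0 // ltW.
have P := ler_wpM2l (mulr_ge0 sk c0) hb'.
have E1 : s ^+ k * ((1 - eta) ^+ k * c) = s ^+ k * c * (1 - eta) ^+ k by ring.
have E2 : A * eta = s ^+ k * c * (k%:R * eta) by rewrite /A; ring.
lra.
Qed.

Section OM2.
Variables (R : realType) (n' : nat).
Local Notation n := n'.+1.
Local Notation V := 'rV[R]_n.
Local Notation m := (@lebn R n).

Lemma cube_aff (p : V) s : 0 < s -> axis_cube p s = aff p s @` (@unit_cube R n).
Proof.
move=> s0; apply/seteqP; split => x.
  move=> Hx; exists (s^-1 *: (x - p)).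
    move=> i; rewrite !mxE; move/andP: (Hx i) => [h1 h2].
    rewrite mulr_ge0 ?invr_ge0 ?subr_ge0 ?(ltW s0) //=.
    rewrite mulrC ler_pdivrMr // mul1r; lra.
  by rewrite /aff scalerA mulfV ?gt_eqF // scale1r addrC subrK.
move=> [y Hy <-] i; rewrite !mxE; move/andP: (Hy i) => [h1 h2].
have : s * y ord0 i <= s * 1 by rewrite ler_wpM2l // ltW.
have : 0 <= s * y ord0 i by rewrite mulr_ge0 // ltW.
move=> *; apply/andP; split; lra.
Qed.

Local Open Scope ereal_scope.

Lemma cube_meas (p : V) s : (0 < s)%R -> m (axis_cube p s) = (s ^+ n)%:E * m (@unit_cube R n).
Proof. by move=> s0; rewrite cube_aff // lebn_aff. Qed.

Lemma hcube_ge (p : V) s c : (0 < s)%R -> m (@unit_cube R n) = c%:E -> (0 <= c)%R ->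
  (s ^+ n * c)%:E <= m (hcube p s).
Proof.
move=> s0 mc c0; case Eh : (m (hcube p s)) => [r| |]; last 2 first.
- by rewrite leey.
- by have := lebn_ge0 (hcube p s); rewrite Eh.
rewrite lee_fin; apply: lim_left => // s' /andP[s'0 s's].
rewrite -lee_fin -Eh EFinM -mc -(cube_meas p) //; apply: le_lebn => x Hx i.
by move/andP: (Hx i) => [-> h2]; rewrite (le_lt_trans h2) // ltrD2l.
Qed.

End OM2.

Section Additive.
Variables (R : realType) (T : Type) (mu : {outer_measure set T -> \bar R}).
Local Open Scope ereal_scope.

Definition Useq (I : eqType) (s : seq I) (H : I -> set T) : set T :=
  [set x | exists2 j, j \in s & H j x].

Lemma Useq_cara (I : eqType) (s : seq I) (H : I -> set T) :
  (forall j, mu.-caratheodory (H j)) -> mu.-caratheodory (Useq s H).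
Proof.
move=> Hm; elim: s => [|a s IH].
  have -> : Useq [::] H = set0 by apply/seteqP; split => x // [j].
  exact: caratheodory_measurable_set0.
have -> : Useq (a :: s) H = H a `|` Useq s H.
  apply/seteqP; split => x.
    by move=> [j]; rewrite in_cons => /orP[/eqP-> |js Hj]; [left|right; exists j].
  by move=> [Ha|[j js Hj]]; [exists a; rewrite ?mem_head|exists j; rewrite // in_cons js orbT].
exact: caratheodory_measurable_setU.
Qed.

Lemma Useq_additive (I : eqType) (s : seq I) (H : I -> set T) X :
  (forall j, mu.-caratheodory (H j)) ->
  (forall j k, j != k -> H j `&` H k = set0) -> uniq s ->
  mu (X `&` Useq s H) = \sum_(j <- s) mu (X `&` H j).
Proof.
move=> Hm Hd; elim: s => [|a s IH].
  have -> : Useq [::] H = set0 by apply/seteqP; split => x // [j].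
  by rewrite setI0 big_nil outer_measure0.
move=> /andP[nas us].
have -> : Useq (a :: s) H = H a `|` Useq s H.
  apply/seteqP; split => x.
    by move=> [j]; rewrite in_cons => /orP[/eqP-> |js Hj]; [left|right; exists j].
  by move=> [Ha|[j js Hj]]; [exists a; rewrite ?mem_head|exists j; rewrite // in_cons js orbT].
rewrite disjoint_caratheodoryIU ?big_cons ?IH //; first exact: Useq_cara.
apply/eqP; apply/seteqP; split => x // [Ha [j js Hj]].
have aj : a != j by apply: contraNneq nas => ->.
by have := Hd _ _ aj; move/seteqP => [/(_ x (conj Ha Hj))].
Qed.

End Additive.

Lemma convexP (R : realType) n (Lam : set 'rV[R]_n) (a b : 'rV[R]_n) (l : R) :
  convex.convex_set Lam -> Lam a -> Lam b -> 0 <= l -> l <= 1 ->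
  Lam (l *: a + (1 - l) *: b).
Proof.
move=> cL La Lb l0 l1.
have := cL a b (Itv01 l0 l1); rewrite !inE => /(_ La Lb).
by [].
Qed.

Section Geo.
Variables (R : realType) (n : nat).
Local Notation V := 'rV[R]_n.

Definition zc : V := const_mx (2^-1).

Lemma geo (Lam : set V) (d : R) (y w : V) :
  convex.convex_set Lam -> @unit_cube R n `<=` Lam -> 0 < d < 1 -> Lam y ->
  (forall i, `|w ord0 i - (d * 2^-1 + (1 - d) * y ord0 i)| <= d / 2) -> Lam w.
Proof.
move=> cL QL /andP[d0 d1] Ly Hw.
set q : V := zc + d^-1 *: (w - aff (d *: zc) (1 - d) y).
have Qq : @unit_cube R n q.
  move=> i; move: (Hw i) => /ler_normlP [h1 h2]; rewrite /q /aff !mxE.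
  have e0 : 0 < d^-1 by rewrite invr_gt0.
  have de : d * d^-1 = 1 by rewrite mulfV // gt_eqF.
  set X := w ord0 i - _ in h1 h2 *.
  apply/andP; split; nra.
have := convexP cL Ly (QL _ Qq) (_ : 0 <= 1 - d) (_ : 1 - d <= 1).
have -> : (1 - d) *: y + (1 - (1 - d)) *: q = w.
  apply/rowP => i; rewrite /q /aff !mxE; field; lra.
by apply; lra.
Qed.

End Geo.

Section Low.
Variables (R : realType) (n' : nat).
Local Notation n := n'.+1.
Local Notation V := 'rV[R]_n.
Local Notation m := (@lebn R n).

Section Grid.
Variables (s : R) (M : nat).
Local Notation F := {ffun 'I_n -> 'I_(2 * M).+1}.
Definition gcorner (j : F) : V := \row_i (((j i)%:R - M%:R) * s).

Lemma hcube_disj (j k : F) : 0 < s -> j != k ->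
  hcube (gcorner j) s `&` hcube (gcorner k) s = set0.
Proof.
move=> s0 jk; apply/seteqP; split => x // [Hj Hk].
have [i ji] : exists i, j i != k i.
  apply/existsP; apply: contraNT jk; rewrite negb_exists => /forallP H.
  by apply/eqP/ffunP => i; apply/eqP; move: (H i); rewrite negbK.
move/andP: (Hj i) => [a1 a2]; move/andP: (Hk i) => [b1 b2].
move: a1 a2 b1 b2; rewrite !mxE => a1 a2 b1 b2.
have h1 : ((j i)%:R : R) < (k i)%:R + 1 by nra.
have h2 : ((k i)%:R : R) < (j i)%:R + 1 by nra.
rewrite !natr1 !ltr_nat !ltnS in h1 h2.
by move: ji; rewrite -val_eqE /= eqn_leq h1 h2.
Qed.

End Grid.


Local Open Scope ereal_scope.

Lemma low (Lam S : set V) (K c T beta eps : R) :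
  convex.convex_set Lam -> @unit_cube R n `<=` Lam -> Lam `<=` @dilate_unit_cube R n K ->
  m (@unit_cube R n) = c%:E -> (0 < c)%R -> m Lam = T%:E -> (0 < T)%R ->
  m (S `&` Lam) = (beta * T)%:E -> (0 < eps)%R -> (eps < beta)%R -> (beta < 1)%R ->
  exists p : V, axis_cube p (eps / (4 * n%:R)) `<=` Lam /\
    (((beta - eps) / (1 - eps) * ((eps / (4 * n%:R)) ^+ n * c))%:E
       <= m (S `&` axis_cube p (eps / (4 * n%:R)))).
Proof.
move=> cL QL LD mc c0 mT T0 mS e0 eb b1.
set s := (eps / (4 * n%:R))%R.
set d := (eps / (2 * n%:R))%R.
set L := ((beta - eps) / (1 - eps))%R.
have n0 : (0 < n%:R :> R)%R by rewrite ltr0n.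
have s0 : (0 < s)%R by rewrite divr_gt0 // mulr_gt0.
have d0 : (0 < d)%R by rewrite divr_gt0 // mulr_gt0.
have sd : s = (d / 2)%R by rewrite /s /d; field; rewrite gt_eqF.
have nd : (n%:R * d = eps / 2)%R by rewrite /d; field; rewrite gt_eqF.
have nd1 : (1 <= n%:R :> R)%R by rewrite ler1n.
have d1 : (d < 1)%R.
  have : (d <= n%:R * d)%R by rewrite ler_peMl // ltW.
  lra.
have L0 : (0 <= L)%R by rewrite /L divr_ge0 //; lra.
case: (pselect (exists p : V, axis_cube p s `<=` Lam /\
    ((L * (s ^+ n * c))%:E <= m (S `&` axis_cube p s)))) => // Hno.
exfalso.
have Hall : forall p : V, axis_cube p s `<=` Lam ->
    m (S `&` axis_cube p s) <= (L * (s ^+ n * c))%:E.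
  move=> p Hp; rewrite leNgt; apply/negP => h; apply: Hno; exists p; split => //.
  exact: ltW.
set Bd := (2^-1 + `|K| / 2)%R.
have Bd0 : (0 <= Bd)%R by rewrite /Bd addr_ge0 // divr_ge0.
have Lbd : forall x, Lam x -> forall i, (`|x ord0 i| <= Bd)%R.
  move=> x /LD Hx i; move/andP: (Hx i) => [h1 h2].
  have hK : (K <= `|K|)%R by rewrite ler_norm.
  rewrite /Bd; apply/ler_normlP; split; lra.
set M := (Num.truncn (Bd / s)).+1.
have MB : (Bd / s < M%:R)%R by rewrite /M Num.Theory.truncnS_gt.
pose H (j : {ffun 'I_n -> 'I_(2 * M).+1}) : set V :=
  if `[< axis_cube (gcorner s j) s `<=` Lam >] then hcube (gcorner s j) s else set0.
set G := Useq (enum {ffun 'I_n -> 'I_(2 * M).+1}) H.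
have Hcara : forall j, m.-caratheodory (H j).
  move=> j; rewrite /H; case: asboolP => _; first exact: cara_hcube.
  exact: caratheodory_measurable_set0.
have Hdisj : forall j k, j != k -> H j `&` H k = set0.
  move=> j k jk; rewrite /H; case: asboolP => _; last by rewrite set0I.
  case: asboolP => _; last by rewrite setI0.
  exact: hcube_disj.
have Gcara : m.-caratheodory G by exact: Useq_cara.
have GL : G `<=` Lam.
  move=> x [j _]; rewrite /H; case: asboolP => // HL Hx; apply: HL => i.
  by move/andP: (Hx i) => [-> /ltW].
set Ld := aff (d *: @zc R n) (1 - d)%R @` Lam.
have LdG : Ld `<=` G.
  move=> _ [y Ly <-]; set x := aff (d *: @zc R n) (1 - d)%R y.
  have xE : forall i, x ord0 i = (d * 2^-1 + (1 - d) * y ord0 i)%R.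
    by move=> i; rewrite /x /aff /zc !mxE.
  have geox : forall w : V, (forall i, `|w ord0 i - x ord0 i| <= d / 2)%R -> Lam w.
    have dd : (0 < d < 1)%R by apply/andP; split.
    move=> w Hw; apply: (geo cL QL dd Ly) => i.
    by rewrite -xE.
  have Lx : Lam x by apply: geox => i; rewrite subrr normr0 divr_ge0 // ltW.
  have arg0 : forall i, (0 <= x ord0 i / s + M%:R)%R.
    move=> i; have /ler_normlP [h1 h2] := Lbd _ Lx i.
    have : (- Bd / s <= x ord0 i / s)%R by rewrite ler_pM2r ?invr_gt0 //; lra.
    have : (Bd / s = Bd * s^-1)%R by [].
    rewrite mulNr; lra.
  have argM : forall i, (x ord0 i / s + M%:R < (2 * M)%:R)%R.
    move=> i; have /ler_normlP [h1 h2] := Lbd _ Lx i.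
    have : (x ord0 i / s <= Bd / s)%R by rewrite ler_pM2r ?invr_gt0 //; lra.
    rewrite natrM; lra.
  pose j : {ffun 'I_n -> 'I_(2 * M).+1} :=
    [ffun i => inord (Num.truncn (x ord0 i / s + M%:R))].
  have jv : forall i, (j i : nat) = Num.truncn (x ord0 i / s + M%:R).
    move=> i; rewrite ffunE inordK // ltnS ltnW //.
    by rewrite truncn_lt_nat.
  have Hxj : forall i, (((j i)%:R - M%:R) * s <= x ord0 i < ((j i)%:R - M%:R) * s + s)%R.
    move=> i; rewrite jv.
    move: (truncn_itv (arg0 i)) => /andP[h1 h2].
    have hu : (x ord0 i / s * s = x ord0 i)%R by rewrite divfK // gt_eqF.
    move: h1 h2; rewrite -natr1.
    set u := (x ord0 i / s)%R in hu *.
    set t := ((Num.truncn (u + M%:R))%:R : R).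
    move=> h1 h2; apply/andP; split; nra.
  have Cj : axis_cube (gcorner s j) s `<=` Lam.
    move=> w Hw; apply: geox => i.
    move: (Hw i) (Hxj i); rewrite /gcorner !mxE => /andP[w1 w2] /andP[x1 x2].
    rewrite -sd; apply/ler_normlP; split; lra.
  exists j; first by rewrite mem_enum.
  rewrite /H (asboolT Cj) => i; rewrite /gcorner mxE; exact: Hxj.
have mLd : m Ld = ((1 - d) ^+ n * T)%:E.
  by rewrite lebn_aff ?subr_gt0 // mT EFinM.
have mGT : m G <= T%:E by rewrite -mT le_lebn.
have mG0 : 0 <= m G by exact: lebn_ge0.
have mGfin : m G \is a fin_num by rewrite ge0_fin_numE // (le_lt_trans mGT) // ltry.
set gr := fine (m G); have mGE : m G = gr%:E by rewrite /gr fineK.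
have grlow : ((1 - d) ^+ n * T <= gr)%R.
  by rewrite -lee_fin -mGE -mLd le_lebn.
set Y := m (Lam `&` ~` G).
have YT : Y <= T%:E by rewrite -mT le_lebn // => x [].
have Y0 : 0 <= Y by exact: lebn_ge0.
have Yfin : Y \is a fin_num by rewrite ge0_fin_numE // (le_lt_trans YT) // ltry.
set yr := fine Y; have YE : Y = yr%:E by rewrite /yr fineK.
have Tdec : T = (gr + yr)%R.
  have := Gcara Lam; rewrite mT (_ : Lam `&` G = G); last by apply/setIidr.
  by rewrite -/Y mGE YE -EFinD => -[].
have Sdec := Gcara (S `&` Lam).
rewrite mS in Sdec.
have SY : m (S `&` Lam `&` ~` G) <= yr%:E by rewrite -YE le_lebn // => x [[_ ?] ?].
have SG : m (S `&` Lam `&` G) <= (L * gr)%:E.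
  rewrite /G (Useq_additive (S `&` Lam) Hcara Hdisj (enum_uniq _)).
  rewrite EFinM -mGE -[G]setTI /G (Useq_additive setT Hcara Hdisj (enum_uniq _)).
  rewrite ge0_sume_distrr; last by move=> *; exact: lebn_ge0.
  apply: lee_sum => j _; rewrite setTI /H; case: asboolP => Cj; last first.
    by rewrite setI0 outer_measure0 mule0.
  apply: (@le_trans _ _ (m (S `&` axis_cube (gcorner s j) s))).
    by apply: le_lebn => x [[Sx _] Hx]; split => // i; move/andP: (Hx i) => [-> /ltW].
  apply: (le_trans (Hall _ Cj)); rewrite EFinM lee_wpmul2l ?lee_fin //.
  exact: hcube_ge (ltW c0).
have key : (beta * T <= L * gr + yr)%R.
  by rewrite -lee_fin Sdec EFinD leeD.
have hb := @bern R d n.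
have hb' : (1 - n%:R * d <= (1 - d) ^+ n)%R by apply: hb; apply/andP; split; lra.
have hbT := ler_wpM2r (ltW T0) hb'.
have hL : (L * (1 - eps) = beta - eps)%R by rewrite /L divfK // gt_eqF //; lra.
have hL1 : (0 < 1 - L)%R.
  have : (L * (1 - eps) < 1 - eps)%R by rewrite hL; lra.
  have e1 : (0 < 1 - eps)%R by lra.
  rewrite -{2}(mul1r (1 - eps)%R) ltr_pM2r //; lra.
have P1 := mulr_gt0 (mulr_gt0 hL1 e0) T0.
have P2 : ((1 - L) * ((1 - n%:R * d) * T) <= (1 - L) * gr)%R.
  by rewrite ler_wpM2l ?(ltW hL1) // (le_trans hbT).
have P3 : (L * (1 - eps) * T = (beta - eps) * T)%R by rewrite hL.
rewrite nd in P2.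
clear -key P1 P2 P3 Tdec e0 T0. nra.
Qed.

End Low.

Lemma power_lip (R : realType) (s x : R) k : 0 <= s -> 0 <= x <= 1 ->
  (s + x) ^+ k - s ^+ k <= k%:R * x * (s + 1) ^+ k.
Proof.
move=> s0 /andP[x0 x1]; elim: k => [|k IH]; first by rewrite !expr0 subrr mul0r mul0r.
rewrite !exprS.
have a0 : 0 <= s ^+ k by rewrite exprn_ge0.
have a1 : s ^+ k <= (s + 1) ^+ k by rewrite lerXn2r ?nnegrE //; lra.
have b0 : 0 <= (s + 1) ^+ k by rewrite exprn_ge0 //; lra.
have H1 : (s + x) * ((s + x) ^+ k - s ^+ k) <= (s + 1) * (k%:R * x * (s + 1) ^+ k).
  apply: ler_pM => //; first by lra.
  by rewrite subr_ge0 lerXn2r ?nnegrE //; lra.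
  by lra.
have H2 : x * s ^+ k <= x * (s + 1) ^+ k by rewrite ler_wpM2l.
have H3 : 0 <= x * (s + 1) ^+ k * s by rewrite !mulr_ge0.
rewrite -natr1.
have E : (s + x) * (s + x) ^+ k - s * s ^+ k =
   (s + x) * ((s + x) ^+ k - s ^+ k) + x * s ^+ k by ring.
rewrite E; nra.
Qed.

Lemma slide (R : realType) (f : nat -> R) (N : nat) (lo hi : R) :
  lo <= f 0%N -> f N <= hi -> lo <= hi ->
  (forall k, (k < N)%N -> f k - f k.+1 <= hi - lo) ->
  exists2 k, (k <= N)%N & lo <= f k <= hi.
Proof.
move=> f0 fN lh st.
suff : forall k, (k <= N)%N -> (exists2 j, (j <= N)%N & lo <= f j <= hi) \/ hi < f k.
  move/(_ N (leqnn N)) => [//|]; rewrite ltNge fN //.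
elim=> [|k IH] kN.
  case: (leP (f 0%N) hi) => h; last by right.
  by left; exists 0%N => //; rewrite f0 h.
case: (IH (ltnW kN)) => [|hk]; first by left.
case: (leP (f k.+1) hi) => h; last by right.
left; exists k.+1 => //; rewrite h andbT.
have := st k kN; lra.
Qed.

Section Cont.
Variables (R : realType) (n' : nat).
Local Notation n := n'.+1.
Local Notation V := 'rV[R]_n.
Local Notation m := (@lebn R n).
Local Open Scope ereal_scope.

Lemma cont_bound (E : set V) (a b : V) (s h c : R) :
  (0 < s)%R -> (0 <= h)%R -> m (@unit_cube R n) = c%:E ->
  (forall i, `|a ord0 i - b ord0 i| <= h)%R ->
  m (E `&` axis_cube a s) <= m (E `&` axis_cube b s) + ((((s + 2 * h) ^+ n - s ^+ n) * c)%R)%:E.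
Proof.
move=> s0 h0 mc Hab.
set D := axis_cube (b - h *: const_mx 1)%R (s + 2 * h)%R.
have sh0 : (0 < s + 2 * h)%R by lra.
have BD : axis_cube b s `<=` D.
  move=> x Hx i; move/andP: (Hx i) => [h1 h2]; rewrite !mxE mulr1.
  apply/andP; split; lra.
have AD : axis_cube a s `<=` D.
  move=> x Hx i; move/andP: (Hx i) => [h1 h2]; rewrite !mxE mulr1.
  move/ler_normlP: (Hab i) => [h3 h4].
  apply/andP; split; lra.
have Dsplit := cara_cube b s D.
rewrite (_ : D `&` axis_cube b s = axis_cube b s) in Dsplit; last exact/setIidr.
rewrite /D !cube_meas // mc in Dsplit.
rewrite -/D in Dsplit.
have Yle : m (D `&` ~` axis_cube b s) <= (((s + 2 * h) ^+ n - s ^+ n) * c)%:E.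
  have Y0 := lebn_ge0 (D `&` ~` axis_cube b s).
  move: Dsplit; set Y := m (D `&` ~` _) in Y0 *.
  case: Y Y0 => [y| |] // Y0.
  - rewrite -!EFinM -EFinD => -[Ey]; rewrite lee_fin; lra.
apply: (le_trans _ (leeD2l _ Yle)).
apply: le_trans (outer_measureU2 _ _ _); apply: le_lebn.
move=> x [Ex Ax]; case: (pselect (axis_cube b s x)) => Bx; first by left.
by right; split => //; exact: AD.
Qed.

End Cont.

Lemma fin_of (R : realType) (x : \bar R) (y : R) : (0 <= x)%E -> (x <= y%:E)%E -> x = (fine x)%:E.
Proof.
move=> x0 xy; rewrite fineK // ge0_fin_numE //; exact: (le_lt_trans xy (ltry _)).
Qed.

Lemma conv_cube (R : realType) n (Lam : set 'rV[R]_n) (p1 p2 : 'rV[R]_n) s l :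
  convex.convex_set Lam -> axis_cube p1 s `<=` Lam -> axis_cube p2 s `<=` Lam ->
  0 <= l <= 1 -> axis_cube (l *: p1 + (1 - l) *: p2) s `<=` Lam.
Proof.
move=> cL C1 C2 /andP[l0 l1] w Hw.
set q := l *: p1 + (1 - l) *: p2.
have -> : w = l *: (w - q + p1) + (1 - l) *: (w - q + p2).
  by apply/rowP => i; rewrite /q !mxE; ring.
apply: convexP => //.
- apply: C1 => i; move/andP: (Hw i); rewrite /q !mxE => -[h1 h2].
  apply/andP; split; lra.
- apply: C2 => i; move/andP: (Hw i); rewrite /q !mxE => -[h1 h2].
  apply/andP; split; lra.
Qed.

Lemma dilate_sub (R : realType) n (K : R) :
  @dilate_unit_cube R n K `<=` axis_cube (const_mx (2^-1 - K / 2)) K.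
Proof. by move=> x Hx i; rewrite mxE; move/andP: (Hx i) => [h1 h2]; apply/andP; split; lra. Qed.

Theorem lemma3 (R : realType) (n : nat) :
  exists a_n A_n : R, 0 < a_n /\ a_n <= A_n /\
  forall (alpha eps : R) (Lam E : set 'rV[R]_n),
    0 < alpha < 1 ->
    0 < eps -> eps < Num.min alpha (1 - alpha) ->
    convex.convex_set Lam ->
    @unit_cube R n `<=` Lam ->
    Lam `<=` @dilate_unit_cube R n (n%:R `^ (3 / 2)) ->
    lebn_measurable E ->
    (lebn E < +oo)%E ->
    avg_char E Lam = alpha ->
    exists (p : 'rV[R]_n) (s : R),
      0 < s /\
      axis_cube p s `<=` Lam /\
      ((a_n * eps ^+ n)%:E <= lebn (axis_cube p s))%E /\
      (lebn (axis_cube p s) <= (A_n * eps ^+ n)%:E)%E /\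
      (alpha - eps) / (1 - eps) <= avg_char E (axis_cube p s) /\
      avg_char E (axis_cube p s) <= alpha / (1 - eps).
Proof.
case: n => [|n'].
  exists 1, 1; split; first lra; split; first lra.
  by move=> alpha eps Lam E _ _ _ _ _ _ _; rewrite lebn_dim0.
set n := n'.+1.
set c0 := fine (lebn (@unit_cube R n)).
set kk := (4 * n%:R) ^+ n : R.
have n0 : (0 < n%:R :> R) by rewrite ltr0n.
have kk0 : 0 < kk by rewrite exprn_gt0 // mulr_gt0.
set a := if 0 < c0 then c0 / kk else 1.
have a0 : 0 < a by rewrite /a; case: ifP => // c0p; rewrite divr_gt0.
exists a, a; split => //; split => //.
move=> alpha eps Lam E /andP[al0 al1] e0 emin cL QL LD Emeas Efin avg.
have ea : eps < alpha by move: emin; rewrite lt_min => /andP[].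
have ea' : eps < 1 - alpha by move: emin; rewrite lt_min => /andP[].
set T := fine (lebn Lam).
have T0 : T != 0.
  apply/negP => /eqP T0; move: avg; rewrite /avg_char -/T T0 invr0 mulr0 => a00.
  by move: al0; rewrite -a00 ltxx.
have mT : lebn Lam = T%:E.
  move: T0 (lebn_ge0 Lam); rewrite /T; case: (lebn Lam) => [r| |] //=.
  by rewrite eqxx.
have Tp : 0 < T.
  by rewrite lt_neqAle eq_sym T0 /= -lee_fin -mT lebn_ge0.
set ET := fine (lebn (E `&` Lam)).
have mET : lebn (E `&` Lam) = ET%:E.
  by apply: (fin_of (lebn_ge0 _) (y := T)); rewrite -mT le_lebn // => x [].
have ETv : ET = alpha * T.
  by move: avg; rewrite /avg_char -/T -/ET => <-; rewrite divfK.
have mc : lebn (@unit_cube R n) = c0%:E.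
  by apply: (fin_of (lebn_ge0 _) (y := T)); rewrite -mT le_lebn.
set K := n%:R `^ (3 / 2) : R.
have K0 : 0 < K by rewrite powR_gt0.
have c0p : 0 < c0.
  rewrite lt_neqAle fine_ge0 ?lebn_ge0 // andbT; apply/negP => /eqP c00.
  set p0 : 'rV[R]_n := const_mx (2^-1 - K / 2).
  have : (lebn Lam <= lebn (axis_cube p0 K))%E.
    by apply: le_lebn; apply: (subset_trans LD); exact: dilate_sub.
  rewrite cube_meas // mc -c00 mule0 mT lee_fin; lra.
have aE : a = c0 / kk by rewrite /a c0p.
rewrite aE.
set s := eps / (4 * n%:R).
have s0 : 0 < s by rewrite divr_gt0 // mulr_gt0.
set V := s ^+ n * c0.
have V0 : 0 < V by rewrite mulr_gt0 // exprn_gt0.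
have mC : forall p : 'rV[R]_n, lebn (axis_cube p s) = V%:E.
  by move=> p; rewrite cube_meas // mc -EFinM.
have VE : V = c0 / kk * eps ^+ n by rewrite /V /s expr_div_n /kk; field; rewrite gt_eqF.
set L := (alpha - eps) / (1 - eps).
set U := alpha / (1 - eps).
have e1 : 0 < 1 - eps by lra.
have UL : U - L = eps / (1 - eps) by rewrite /U /L; field; rewrite gt_eqF.
have ULp : 0 < U - L by rewrite UL divr_gt0.
have mSE : lebn (E `&` Lam) = (alpha * T)%:E by rewrite mET ETv.
have [p1 [C1 H1]] := @low R n' Lam E K c0 T alpha eps cL QL LD mc c0p mT Tp
  mSE e0 ea al1.
have mCE : lebn (~` E `&` Lam) = ((1 - alpha) * T)%:E.
  have := Emeas Lam; rewrite mT (setIC Lam E) mET ETv.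
  rewrite (_ : Lam `\` E = ~` E `&` Lam); last by rewrite setDE setIC.
  have Y0 := lebn_ge0 (~` E `&` Lam).
  case: (lebn (~` E `&` Lam)) Y0 => [y| |] // Y0.
  by rewrite -EFinD => -[Ey]; congr EFin; lra.
have [p2 [C2 H2]] := @low R n' Lam (~` E) K c0 T (1 - alpha) eps cL QL LD mc c0p mT Tp
  mCE e0 ea' (ltac:(lra)).
rewrite -/s -/V in H1 H2 C1 C2.
have fin : forall p : 'rV[R]_n, lebn (E `&` axis_cube p s) = (fine (lebn (E `&` axis_cube p s)))%:E.
  by move=> p; apply: (fin_of (lebn_ge0 _) (y := V)); rewrite -(mC p) le_lebn // => x [].
have fle : forall p : 'rV[R]_n, fine (lebn (E `&` axis_cube p s)) <= V.
  by move=> p; rewrite -lee_fin -fin -(mC p) le_lebn // => x [].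
have f1 : L * V <= fine (lebn (E `&` axis_cube p1 s)) by rewrite -lee_fin -fin -/L.
have f2 : fine (lebn (E `&` axis_cube p2 s)) <= U * V.
  have := Emeas (axis_cube p2 s); rewrite mC (setIC _ E) fin.
  rewrite (_ : axis_cube p2 s `\` E = ~` E `&` axis_cube p2 s); last by rewrite setDE setIC.
  have Y0 := lebn_ge0 (~` E `&` axis_cube p2 s).
  move: H2; case: (lebn (~` E `&` axis_cube p2 s)) Y0 => [y| |] // Y0.
  - rewrite lee_fin -EFinD => Hy -[Ev].
    have : (1 - alpha - eps) / (1 - eps) = 1 - U by rewrite /U; field; rewrite gt_eqF.
    move=> E1; rewrite E1 in Hy; nra.
set Dm := \sum_(i < n) `|p1 ord0 i - p2 ord0 i|.
have Dm0 : 0 <= Dm by apply: sumr_ge0 => i _.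
have Dmi : forall i, `|p1 ord0 i - p2 ord0 i| <= Dm.
  by move=> i; rewrite /Dm (bigD1 i) //= lerDl sumr_ge0.
set W := n%:R * (s + 1) ^+ n * c0 / ((U - L) * V).
have W0 : 0 <= W.
  rewrite /W divr_ge0 //.
    by rewrite !mulr_ge0 ?exprn_ge0 ?(ltW c0p) //; lra.
  by rewrite ltW // mulr_gt0.
have WE : W * ((U - L) * V) = n%:R * (s + 1) ^+ n * c0.
  by rewrite /W divfK // gt_eqF // mulr_gt0.
set N := (Num.truncn (2 * Dm * (W + 1))).+1.
have NP : 2 * Dm * (W + 1) < N%:R by rewrite /N Num.Theory.truncnS_gt.
have N0 : 0 < N%:R :> R by rewrite ltr0n.
set h := Dm / N%:R.
have h0 : 0 <= h by rewrite divr_ge0 // ltW.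
have hN : h * N%:R = Dm by rewrite /h divfK // gt_eqF.
have h1 : 2 * h * (W + 1) < 1.
  have : 2 * h * (W + 1) * N%:R < 1 * N%:R.
    have -> : 2 * h * (W + 1) * N%:R = 2 * Dm * (W + 1) by rewrite -hN; ring.
    by rewrite mul1r.
  by rewrite ltr_pM2r.
pose l (k : nat) : R := 1 - k%:R / N%:R.
pose q (k : nat) : 'rV[R]_n := l k *: p1 + (1 - l k) *: p2.
pose f (k : nat) := fine (lebn (E `&` axis_cube (q k) s)).
have q0 : q 0%N = p1 by rewrite /q /l mul0r subr0 subrr scale1r scale0r addr0.
have qN : q N = p2 by rewrite /q /l divff ?gt_eqF // subrr subr0 scale1r scale0r add0r.
have Cq : forall k, (k <= N)%N -> axis_cube (q k) s `<=` Lam.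
  move=> k kN; apply: conv_cube => //; rewrite /l.
  have : k%:R / N%:R <= 1 :> R by rewrite ler_pdivrMr // mul1r ler_nat.
  have : 0 <= k%:R / N%:R :> R by rewrite divr_ge0 // ltW.
  by move=> *; apply/andP; split; lra.
have step : forall k, (k < N)%N -> f k - f k.+1 <= U * V - L * V.
  move=> k kN.
  have Hab : forall i, `|q k ord0 i - q k.+1 ord0 i| <= h.
    move=> i.
    have -> : q k ord0 i - q k.+1 ord0 i = (p1 ord0 i - p2 ord0 i) / N%:R.
      by rewrite /q /l !mxE -natr1; field; rewrite gt_eqF.
    by rewrite normrM (ger0_norm (_ : 0 <= N%:R^-1)) ?invr_ge0 ?(ltW N0) // /h ler_pM2r ?invr_gt0.
  have cb := cont_bound E s0 h0 mc Hab.
  rewrite fin [X in (_ <= X + _)%E]fin -EFinD lee_fin in cb.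
  have pl := @power_lip R s (2 * h) n (ltW s0) (_ : 0 <= 2 * h <= 1).
  have pl' : (s + 2 * h) ^+ n - s ^+ n <= n%:R * (2 * h) * (s + 1) ^+ n.
    by apply: pl; apply/andP; split; nra.
  have pc := ler_wpM2r (ltW c0p) pl'.
  have E2 : n%:R * (2 * h) * (s + 1) ^+ n * c0 = 2 * h * W * ((U - L) * V).
    have -> : 2 * h * W * ((U - L) * V) = 2 * h * (W * ((U - L) * V)) by ring.
    by rewrite WE; ring.
  rewrite E2 in pc.
  have : 2 * h * W * ((U - L) * V) <= (U - L) * V.
    rewrite -{2}(mul1r ((U - L) * V)) ler_pM2r ?mulr_gt0 ?exprn_gt0 //; clear -h1 h0; lra.
  rewrite /f; lra.
have sf0 : L * V <= f 0%N by rewrite /f q0.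
have sfN : f N <= U * V by rewrite /f qN.
have sLU : L * V <= U * V by rewrite ler_pM2r //; lra.
have [k kN /andP[fk1 fk2]] := @slide R f N (L * V) (U * V) sf0 sfN sLU step.
exists (q k), s; split => //; split; first exact: Cq.
rewrite mC -VE; split => //; split => //.
rewrite /avg_char mC /= -/(f k).
split; first by rewrite ler_pdivlMr.
by rewrite ler_pdivrMr.
Qed.
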